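(* Let $M$ be a positive integer, let $\{\alpha_i\}_{i=0}^{M}$ be a log-concave sequence of non-negative real numbers, and let $g(x)=\sum_{i=0}^{M}\alpha_{i}\binom{M}{i}(1-x)^{i}x^{M-i}$. Then for every $x\in(0,1)$, \[ \frac{M-1}{M}\,g'(x)^{2}\;\ge\; g(x)\,g''(x). \]
   Context: A non-negative sequence $\{a_i\}_{i=0}^{n}$ is called log-concave if, for indices $i,j$ with $i+j$ held fixed, the product $a_ia_j$ is a non-increasing function of $|i-j|$. $\binom{M}{i}$ is the ordinary binomial coefficient. *)

(* Defs.v *)
From HB Require Import structures.
From mathcomp Require Import all_boot all_order all_algebra.
Set Implicit Arguments. Unset Strict Implicit. Unset Printing Implicit Defensive.
Import Order.TTheory GRing.Theory Num.Theory.
Local Open Scope ring_scope.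

Definition nonneg_seq (R : realDomainType) (M : nat) (a : nat -> R) : Prop :=
  forall i, (i <= M)%N -> 0 <= a i.

(* Log-concavity as in the paper: for indices i,j with i+j fixed,
   a_i a_j is non-increasing in |i-j|.  The absolute difference on nat is
   written (maxn i j - minn i j). *)
Definition log_concave (R : realDomainType) (M : nat) (a : nat -> R) : Prop :=
  forall i j k l : nat,
    (i <= M)%N -> (j <= M)%N -> (k <= M)%N -> (l <= M)%N ->
    (i + j = k + l)%N ->
    (maxn i j - minn i j <= maxn k l - minn k l)%N ->
    a k * a l <= a i * a j.

Definition gpoly (R : realDomainType) (M : nat) (a : nat -> R) : {poly R} :=
  \sum_(i < M.+1) (a i * ('C(M, i))%:R) *: ((1 - 'X) ^+ i * 'X ^+ (M - i)).

(* Main.v *)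
Require Import Defs.
From HB Require Import structures.
From mathcomp Require Import all_boot all_order all_algebra.
From mathcomp Require Import ring lra zify.
From Stdlib Require Import IndefiniteDescription.
Import Order.TTheory GRing.Theory Num.Theory.
Local Open Scope ring_scope.
Lemma mul_sums (R : comNzRingType) n (a b : 'I_n -> R) :
  (\sum_(i < n) a i *: 'X^i) * (\sum_(j < n) b j *: 'X^j) =
  \sum_(i < n) \sum_(j < n) (a i * b j) *: ('X^(i + j) : {poly R}).
Proof.
rewrite mulr_suml; apply: eq_bigr => i _; rewrite mulr_sumr; apply: eq_bigr => j _.
by rewrite -scalerAl -scalerAr scalerA exprD.
Qed.

Lemma X_deriv_mon (R : comNzRingType) (n : nat) :
  'X * ('X^n)^`() = 'X^n *+ n :> {poly R}.
Proof.
rewrite derivXn; case: n => [|n] /=; first by rewrite !mulr0n mulr0.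
by rewrite mulrnAr -exprS.
Qed.

Lemma X_deriv_sum (R : comNzRingType) n (a : 'I_n -> R) :
  'X * (\sum_(i < n) a i *: 'X^i)^`() = \sum_(i < n) (a i * i%:R) *: 'X^i :> {poly R}.
Proof.
rewrite raddf_sum mulr_sumr; apply: eq_bigr => i _.
by rewrite /= derivZ -scalerAr X_deriv_mon -scalerA scaler_nat.
Qed.

Lemma B_closed (R : comNzRingType) M :
  \sum_(i < M.+1) ('C(M, i)%:R : R) *: 'X^i = ('X + 1) ^+ M.
Proof.
rewrite exprD1n; apply: eq_bigr => i _; by rewrite scaler_nat.
Qed.

Definition Cf (R : nzRingType) M i : R := 'C(M, i)%:R.
Definition Wf (R : comNzRingType) M (i j : nat) : R :=
  Cf R M i * Cf R M j * ((M%:R - 1) * (i%:R * j%:R) - M%:R * (j%:R * (j%:R - 1))).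

Lemma poly_ident (R : comNzRingType) M : (0 < M)%N ->
  \sum_(i < M.+1) \sum_(j < M.+1) Wf R M i j *: ('X^(i + j) : {poly R}) = 0.
Proof.
move=> M0.
pose B : {poly R} := \sum_(i < M.+1) Cf R M i *: 'X^i.
have hA : 'X * B^`() = \sum_(i < M.+1) (Cf R M i * i%:R) *: 'X^i by rewrite X_deriv_sum.
have hC : 'X * ('X * B^`())^`() - 'X * B^`() =
   \sum_(i < M.+1) (Cf R M i * (i%:R * (i%:R - 1))) *: 'X^i.
  rewrite hA X_deriv_sum -sumrB; apply: eq_bigr => i _.
  by rewrite -scalerBl; congr (_ *: _); ring.
have E : \sum_(i < M.+1) \sum_(j < M.+1) Wf R M i j *: ('X^(i + j) : {poly R}) =
   (M%:R - 1) *: (('X * B^`()) * ('X * B^`())) - M%:R *: (B * ('X * ('X * B^`())^`() - 'X * B^`())).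
  rewrite {1 2}hA hC !mul_sums !scaler_sumr -sumrB; apply: eq_bigr => i _.
  rewrite !scaler_sumr -sumrB; apply: eq_bigr => j _.
  rewrite !scalerA -scalerBl; congr (_ *: _); rewrite /Wf; ring.
rewrite E.
have hB : B = ('X + 1) ^+ M by rewrite /B -B_closed.
have hB1 : B^`() = ('X + 1) ^+ M.-1 *+ M by rewrite hB deriv_exp derivD derivX derivC addr0 mul1r.
rewrite derivM derivX mul1r hB1 derivMn deriv_exp derivD derivX derivC addr0 mul1r.
rewrite hB; clear -M0.
case: M M0 => [//|[|m]] _.
  by rewrite subrr scale0r !mulr0n mulr0 addr0 subrr mulr0 scaler0 subrr.
rewrite /=.
have -> : (m.+2%:R - 1 : R) = m.+1%:R by rewrite mulrSr addrK.
rewrite (scaler_nat m.+1) (scaler_nat m.+2).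
rewrite !(exprS ('X + 1) m.+1) (exprS ('X + 1) m).
move: (('X + 1) ^+ m) => Y.
ring.
Qed.

Lemma sum_delta (R : nzRingType) N k (phi : nat -> R) : (k < N)%N ->
  \sum_(n < N) (n == k :> nat)%:R * phi n = phi k.
Proof.
move=> kN; rewrite (bigD1 (Ordinal kN)) //= eqxx mul1r big1 ?addr0 // => n nk.
have -> : (n == k :> nat) = false.
  by apply/negbTE; apply: contra nk => /eqP nk'; apply/eqP/val_inj.
by rewrite mul0r.
Qed.

Lemma zero_sum (R : comNzRingType) M (phi : nat -> R) : (0 < M)%N ->
  \sum_(i < M.+1) \sum_(j < M.+1) Wf R M i j * phi (i + j)%N = 0.
Proof.
move=> M0.
have := congr1 (fun p : {poly R} => \sum_(n < M.+1 + M.+1) p`_n * phi n) (poly_ident R M M0).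
rewrite /= [in X in _ = X]big1 => [|n _]; last by rewrite coef0 mul0r.
move=> H; apply: (etrans _ H); symmetry.
under eq_bigr => n _ do rewrite coef_sum mulr_suml.
rewrite exchange_big /=; apply: eq_bigr => i _.
under eq_bigr => n _ do rewrite coef_sum mulr_suml.
rewrite exchange_big /=; apply: eq_bigr => j _.
under eq_bigr => n _ do rewrite coefZ coefXn -mulrA.
rewrite -mulr_sumr sum_delta //.
have := ltn_ord i; have := ltn_ord j; lia.
Qed.
Definition Vf (R : realFieldType) M (i j : nat) : R :=
  2 * (M%:R - 1) * (i%:R * j%:R) - M%:R * (i%:R * (i%:R - 1) + j%:R * (j%:R - 1)).

Lemma V_form (R : realFieldType) M m s : (2 * m <= s)%N ->
  2 * Vf R M m (s - m)%N = - (s%:R ^+ 2) + 2 * M%:R * s%:R - (2 * M%:R - 1) * ((s - 2 * m)%N%:R ^+ 2).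
Proof.
move=> h; rewrite /Vf !natrB ?natrM //; last by lia.
ring.
Qed.

Lemma V_mono (R : realFieldType) M m1 m2 s : (0 < M)%N -> (m1 <= m2)%N -> (2 * m2 <= s)%N ->
  Vf R M m1 (s - m1)%N <= Vf R M m2 (s - m2)%N.
Proof.
move=> M0 h12 h2.
have h1 : (2 * m1 <= s)%N by lia.
have e1 := V_form R M m1 s h1; have e2 := V_form R M m2 s h2.
have hk : ((s - 2 * m2)%N%:R : R) <= (s - 2 * m1)%N%:R by rewrite ler_nat; lia.
have hk0 : (0 : R) <= (s - 2 * m2)%N%:R by [].
have hM : (1 : R) <= M%:R by rewrite ler1n.
move: hk hk0 e1 e2; set a := ((s - 2 * m2)%N%:R : R); set b := ((s - 2 * m1)%N%:R : R) => hk hk0 e1 e2.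
have h3 : 0 <= (2 * M%:R - 1) * ((b - a) * (b + a)).
  by apply: mulr_ge0; [lra | apply: mulr_ge0; lra].
have : Vf R M m2 (s - m2)%N - Vf R M m1 (s - m1)%N = (2 * M%:R - 1) * ((b - a) * (b + a)) / 2.
  apply: (mulfI (x := 2)); first by rewrite pnatr_eq0.
  rewrite mulrBr e1 e2; field; by rewrite ?pnatr_eq0 ?oner_eq0.
lra.
Qed.

Lemma Vsym (R : realFieldType) M i j : Vf R M i j = Vf R M j i.
Proof. rewrite /Vf; ring. Qed.

Lemma lc_app (R : realFieldType) M (e : nat -> R) m m' s : log_concave M e ->
  (m' <= m)%N -> (2 * m <= s)%N -> (s - m' <= M)%N ->
  e m' * e (s - m')%N <= e m * e (s - m)%N.
Proof.
move=> lc h1 h2 h3; apply: lc; lia.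
Qed.

Lemma exc (R : realFieldType) M (e : nat -> R) s : (0 < M)%N -> log_concave M e ->
  exists c : R, forall i j, (i <= M)%N -> (j <= M)%N -> (i + j = s)%N ->
    0 <= Vf R M i j * (e i * e j - c).
Proof.
move=> M0 lc.
case: (leqP s (2 * M)) => hs; last first.
  by exists 0 => i j hi hj hij; exfalso; lia.
pose P m := [&& (2 * m <= s)%N, (s - m <= M)%N & 0 <= Vf R M m (s - m)%N].
have exP : exists m, P m.
  exists s./2; apply/and3P; split; [lia | lia |].
  have hd := odd_double_half s.
  have h2 : (2 * s./2 <= s)%N by lia.
  have := V_form R M s./2 s h2.
  have hM : ((s./2)%:R : R) + (odd s)%:R <= M%:R by rewrite -natrD ler_nat; lia.
  have hs' : (s%:R : R) = 2 * (s./2)%:R + (odd s)%:R.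
    by rewrite -[in LHS]hd natrD -muln2 natrM addrC mulrC.
  have hk : ((s - 2 * s./2)%N%:R : R) = (odd s)%:R by congr (_%:R); lia.
  rewrite hk hs'.
  have h0 : (0 : R) <= (s./2)%:R by [].
  case: (odd s) hM => /= hM.
    have : 0 <= (s./2)%:R * (M%:R - (s./2)%:R - 1) :> R by apply: mulr_ge0; lra.
    nra.
  have : 0 <= (s./2)%:R * (M%:R - (s./2)%:R) :> R by apply: mulr_ge0; lra.
  nra.
case: (ex_minnP exP) => ms /and3P [Pm1 Pm2 Pm3] msmin.
exists (e ms * e (s - ms)%N).
suff H : forall m, (2 * m <= s)%N -> (s - m <= M)%N ->
    0 <= Vf R M m (s - m)%N * (e m * e (s - m)%N - e ms * e (s - ms)%N).
  move=> i j hi hj hij; case: (leqP i j) => hij'.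
    have -> : j = (s - i)%N by lia.
    apply: H; lia.
  have -> : i = (s - j)%N by lia.
  rewrite Vsym [e _ * e j]mulrC; apply: H; lia.
move=> m hm1 hm2.
case: (boolP (P m)) => Pm.
  have := msmin m Pm => hle.
  apply: mulr_ge0; first by case/and3P: Pm.
  by rewrite subr_ge0; apply: (@lc_app R M e m ms s lc hle hm1 Pm2).
have hV : Vf R M m (s - m)%N < 0.
  by rewrite ltNge; apply: contra Pm => h; apply/and3P.
have hlt : (m < ms)%N.
  rewrite ltnNge; apply/negP => hle.
  have := V_mono R M ms m s M0 hle hm1; lra.
apply: mulr_le0; first lra.
rewrite subr_le0; apply: (@lc_app R M e ms m s lc) => //; lia.
Qed.

Lemma key_pos (R : realFieldType) M (e : nat -> R) : (0 < M)%N -> log_concave M e ->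
  0 <= \sum_(i < M.+1) \sum_(j < M.+1) Wf R M i j * (e i * e j).
Proof.
move=> M0 lc.
pose c s := proj1_sig (constructive_indefinite_description _ (exc R M e s M0 lc)).
have hc s := proj2_sig (constructive_indefinite_description _ (exc R M e s M0 lc)).
pose G (i j : nat) := e i * e j - c (i + j)%N.
have E1 : \sum_(i < M.+1) \sum_(j < M.+1) Wf R M i j * (e i * e j) =
          \sum_(i < M.+1) \sum_(j < M.+1) Wf R M i j * G i j.
  have Z := zero_sum R M c M0.
  transitivity (\sum_(i < M.+1) \sum_(j < M.+1) Wf R M i j * (e i * e j) -
     \sum_(i < M.+1) \sum_(j < M.+1) Wf R M i j * c (i + j)%N); first by rewrite Z subr0.
  rewrite -sumrB; apply: eq_bigr => i _; rewrite -sumrB.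
  by apply: eq_bigr => j _; rewrite mulrBr.
have E2 : \sum_(i < M.+1) \sum_(j < M.+1) Wf R M i j * G i j =
          \sum_(i < M.+1) \sum_(j < M.+1) Wf R M j i * G i j.
  rewrite exchange_big /=; apply: eq_bigr => i _; apply: eq_bigr => j _.
  by rewrite /G [e j * _]mulrC addnC.
move: E1 E2.
have : 0 <= \sum_(i < M.+1) \sum_(j < M.+1) (Wf R M i j + Wf R M j i) * G i j.
  apply: sumr_ge0 => i _; apply: sumr_ge0 => j _.
  have -> : Wf R M i j + Wf R M j i = Cf R M i * Cf R M j * Vf R M i j.
    by rewrite /Wf /Vf; ring.
  rewrite -(mulrA (Cf R M i * Cf R M j)); apply: mulr_ge0; first by apply: mulr_ge0; rewrite /Cf ler0n.
  apply: (hc (i + j)%N); [by have := ltn_ord i | by have := ltn_ord j | by []].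
under eq_bigr => i _ do under eq_bigr => j _ do rewrite mulrDl.
under eq_bigr => i _ do rewrite big_split.
rewrite big_split /= => H; lra.
Qed.
Lemma pow_pred (R : comNzRingType) (p : R) n : p * (p ^+ n.-1 *+ n) = p ^+ n *+ n.
Proof. case: n => [|n] /=; first by rewrite !mulr0n mulr0. by rewrite mulrnAr -exprS. Qed.

Definition qp (R : comNzRingType) M i : {poly R} := (1 - 'X) ^+ i * 'X ^+ (M - i).

Lemma L1 (R : comNzRingType) M i : (i <= M)%N ->
  'X * (1 - 'X) * (qp R M i)^`() = (M%:R * (1 - 'X) - i%:R) * qp R M i.
Proof.
move=> iM; rewrite /qp derivM deriv_exp derivB derivC derivX derivXn sub0r -mulrnAr.
have h1 := pow_pred _ (1 - 'X : {poly R}) i.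
have h2 := pow_pred _ ('X : {poly R}) (M - i).
move: h1 h2.
move: ((1 - 'X) ^+ i.-1 *+ i) ((1 - 'X) ^+ i) ('X ^+ (M - i).-1 *+ (M - i)) ('X ^+ (M - i)) => A Y B Z h1 h2.
have -> : 'X * (1 - 'X) * (- 1 * A * Z + Y * B) = - ('X * Z) * ((1 - 'X) * A) + (1 - 'X) * Y * ('X * B) by ring.
rewrite h1 h2 -[Y *+ i]mulr_natr -[Z *+ (M - i)]mulr_natr natrB //.
ring.
Qed.

Lemma L2 (R : realFieldType) M (a : nat -> R) :
  'X * (1 - 'X) * (gpoly M a)^`() =
  \sum_(i < M.+1) (a i * ('C(M, i))%:R) *: ((M%:R * (1 - 'X) - i%:R) * qp R M i).
Proof.
rewrite /gpoly raddf_sum mulr_sumr; apply: eq_bigr => i _ /=.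
by rewrite derivZ -scalerAr L1 // -ltnS.
Qed.

Lemma L3 (R : realFieldType) M (a : nat -> R) :
  ('X * (1 - 'X))^`() * (gpoly M a)^`() + 'X * (1 - 'X) * (gpoly M a)^`(2) =
  \sum_(i < M.+1) (a i * ('C(M, i))%:R) *:
     ((M%:R * (1 - 'X) - i%:R)^`() * qp R M i + (M%:R * (1 - 'X) - i%:R) * (qp R M i)^`()).
Proof.
rewrite derivnS derivn1 -derivM L2 raddf_sum; apply: eq_bigr => i _.
by rewrite /= derivZ derivM.
Qed.

Lemma horner1' (R : comNzRingType) (x : R) : (1 : {poly R}).[x] = 1.
Proof. by rewrite -polyC1 hornerC. Qed.

Definition hE := (hornerD, hornerN, hornerX, hornerC, hornerZ, hornerMn, horner1', horner_exp, hornerM, horner_sum).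

Lemma lin3 (R : comNzRingType) n (al be ga : R) (F G H : 'I_n -> R) :
  al * (\sum_(i < n) F i) + be * (\sum_(i < n) G i) + ga * (\sum_(i < n) H i) =
  \sum_(i < n) (al * F i + be * G i + ga * H i).
Proof. by rewrite !mulr_sumr -!big_split. Qed.

Lemma expand (R : realFieldType) M (e : nat -> R) :
  \sum_(i < M.+1) \sum_(j < M.+1) Wf R M i j * (e i * e j) =
  (M%:R - 1) * ((\sum_(i < M.+1) i%:R * (Cf R M i * e i)) * (\sum_(j < M.+1) j%:R * (Cf R M j * e j)))
  - M%:R * ((\sum_(i < M.+1) Cf R M i * e i) * (\sum_(j < M.+1) (j%:R * (j%:R - 1)) * (Cf R M j * e j))).
Proof.
rewrite !big_distrlr !mulr_sumr -sumrB; apply: eq_bigr => i _.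
rewrite !mulr_sumr -sumrB; apply: eq_bigr => j _.
rewrite /Wf /=; ring.
Qed.
Lemma d1 (R : realFieldType) (x : R) : (('X * (1 - 'X))^`()).[x] = 1 - 2 * x.
Proof. rewrite !derivE !hE. ring. Qed.

Lemma d2 (R : realFieldType) M i (x : R) : ((M%:R * (1 - 'X) - i%:R)^`()).[x] = - M%:R.
Proof. rewrite !derivE !hE. ring. Qed.

Theorem mainTheorem4 (R : realFieldType) (M : nat) (a : nat -> R) :
  (0 < M)%N -> nonneg_seq M a -> log_concave M a ->
  forall x : R, 0 < x < 1 ->
    (gpoly M a).[x] * ((gpoly M a)^`(2)).[x]
      <= ((M.-1)%:R / M%:R) * ((gpoly M a)^`()).[x] ^+ 2.
Proof.
move=> M0 nn lc x /andP [x0 x1].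
pose y := 1 - x; pose s := x * y.
have y0 : 0 < y by rewrite /y subr_gt0.
have s0 : 0 < s by rewrite /s mulr_gt0.
pose Q i := (qp R M i).[x].
have hQ i : Q i = y ^+ i * x ^+ (M - i) by rewrite /Q /qp !hE.
have Q0 i : 0 <= Q i by rewrite hQ mulr_ge0 // exprn_ge0 // ltW.
pose e i := a i * Q i.
have lce : log_concave M e.
  move=> i j k l hi hj hk hl hs hd.
  have hQQ : Q k * Q l = Q i * Q j.
    rewrite !hQ.
    have -> : y ^+ k * x ^+ (M - k) * (y ^+ l * x ^+ (M - l)) = y ^+ (k + l) * x ^+ ((M - k) + (M - l)) by rewrite !exprD; ring.
    have -> : y ^+ i * x ^+ (M - i) * (y ^+ j * x ^+ (M - j)) = y ^+ (i + j) * x ^+ ((M - i) + (M - j)) by rewrite !exprD; ring.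
    rewrite hs; congr (_ * x ^+ _); lia.
  rewrite /e.
  have -> : a k * Q k * (a l * Q l) = (a k * a l) * (Q k * Q l) by ring.
  have -> : a i * Q i * (a j * Q j) = (a i * a j) * (Q i * Q j) by ring.
  rewrite hQQ; apply: ler_wpM2r; first by apply: mulr_ge0.
  exact: lc.
pose T0 := \sum_(i < M.+1) Cf R M i * e i.
pose T1 := \sum_(i < M.+1) i%:R * (Cf R M i * e i).
pose T2 := \sum_(i < M.+1) (i%:R * (i%:R - 1)) * (Cf R M i * e i).
have K : 0 <= (M%:R - 1) * (T1 * T1) - M%:R * (T0 * T2).
  have := key_pos R M e M0 lce; rewrite expand => h; exact: h.
have G0 : (gpoly M a).[x] = T0.
  rewrite /gpoly horner_sum /T0; apply: eq_bigr => i _.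
  by rewrite hornerZ /e /Cf /Q /qp; ring.
have G1 : s * ((gpoly M a)^`()).[x] = M%:R * y * T0 - T1.
  have h := congr1 (fun p => p.[x]) (L2 R M a).
  rewrite /= !hE in h.
  rewrite /s /y h /T0 /T1 !mulr_sumr -sumrB; apply: eq_bigr => i _.
  rewrite /e /Cf /Q; rewrite !hE; ring.
have Lx i : (i <= M)%N -> s * ((qp R M i)^`()).[x] = (M%:R * y - i%:R) * Q i.
  move=> iM; have h := congr1 (fun p => p.[x]) (L1 R M i iM).
  rewrite /= !hE in h.
  by rewrite /s /y h hQ.
have G2 : s * ((1 - 2 * x) * ((gpoly M a)^`()).[x] + s * ((gpoly M a)^`(2)).[x]) =
   (M%:R ^+ 2 * y ^+ 2 - M%:R * s) * T0 + (1 - 2 * M%:R * y) * T1 + 1 * T2.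
  have h := congr1 (fun p => p.[x]) (L3 R M a).
  rewrite /= !hE d1 in h.
  rewrite /s /y h /T0 /T1 /T2 lin3 mulr_sumr; apply: eq_bigr => i _.
  rewrite !hE d2.
  have := Lx i; rewrite -ltnS ltn_ord => /(_ isT); rewrite /s /y => hL.
  have -> : forall A B D c E : R, x * (1 - x) * (c * (A * B + D * E)) =
      c * (A * B * (x * (1 - x)) + D * (x * (1 - x) * E)) by move=> *; ring.
  rewrite hL /e /Cf hQ /y; ring.
rewrite G0.
move: G1 G2; set G1v := ((gpoly M a)^`()).[x]; set G2v := ((gpoly M a)^`(2)).[x] => G1 G2.
have hM : (M.-1)%:R = M%:R - 1 :> R by rewrite -subn1 natrB.
have Mpos : (0 : R) < M%:R by rewrite ltr0n.
have e1 : s * s * G2v = ((M%:R ^+ 2 * y ^+ 2 - M%:R * s) * T0 + (1 - 2 * M%:R * y) * T1 + 1 * T2)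
     - (1 - 2 * x) * (s * G1v) by rewrite -G2; ring.
have E : M%:R * (T0 * G2v) * s ^+ 2 - (M%:R - 1) * G1v ^+ 2 * s ^+ 2 =
         M%:R * (T0 * T2) - (M%:R - 1) * (T1 * T1).
  transitivity (M%:R * T0 * (s * s * G2v) - (M%:R - 1) * (s * G1v) ^+ 2); first by ring.
  rewrite e1 G1 /s /y; ring.
have H1 : M%:R * (T0 * G2v) * s ^+ 2 <= (M%:R - 1) * G1v ^+ 2 * s ^+ 2 by lra.
rewrite ler_pM2r ?exprn_gt0 // in H1.
rewrite hM -subr_ge0.
have -> : (M%:R - 1) / M%:R * G1v ^+ 2 - T0 * G2v =
          ((M%:R - 1) * G1v ^+ 2 - M%:R * (T0 * G2v)) / M%:R.
  by field; rewrite lt0r_neq0.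
by apply: divr_ge0; lra.
Qed.
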